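(* Let $N_1\in\mathbb{N}$ and $N_2\in\mathbb{N}$ with $N_2\ge1$. Define $\mathbb{D}_1=[0:N_1-1]$, $\mathbb{D}_2=\{k(N_1+1): k\in[0:N_2-1]\}$, the nested array $\mathbb{D}_{\mathrm{NA}}=\mathbb{D}_1\cup(\mathbb{D}_2+N_1)$, and the symmetric array $\mathbb{S}(\mathbb{D}_{\mathrm{NA}},\ell)=\mathbb{D}_{\mathrm{NA}}\cup(\max\mathbb{D}_{\mathrm{NA}}-\mathbb{D}_{\mathrm{NA}}+\ell)$. Then, with $\ell=N_1$, $$\mathbb{S}(\mathbb{D}_{\mathrm{NA}},N_1)=\mathbb{D}_1\cup(\mathbb{D}_2+N_1)\cup(\mathbb{D}_1+(N_1+1)N_2)\triangleq\mathbb{D}_{\mathrm{CNA}}(N_1,N_2),$$ this set has exactly $2N_1+N_2$ elements, and its sum set is contiguous: $\mathbb{D}_{\mathrm{CNA}}+\mathbb{D}_{\mathrm{CNA}}=[0:2\max\mathbb{D}_{\mathrm{CNA}}]$, where $\max\mathbb{D}_{\mathrm{CNA}}=(N_1+1)N_2+N_1-1$. Moreover its difference set is also contiguous: $\mathbb{D}_{\mathrm{CNA}}-\mathbb{D}_{\mathrm{CNA}}=[-\max\mathbb{D}_{\mathrm{CNA}}:\max\mathbb{D}_{\mathrm{CNA}}]$.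
   Context: For finite sets $\mathbb{A},\mathbb{B}\subset\mathbb{Z}$ and $c\in\mathbb{Z}$: $\mathbb{A}+\mathbb{B}=\{a+b\}$, $\mathbb{A}-\mathbb{B}=\{a-b\}$, $c-\mathbb{A}=\{c-a\}$, $\mathbb{A}+c=\{a+c\}$; $[a:b]=\{c\in\mathbb{Z}: a\le c\le b\}$ (empty if $b<a$); $\mathbb{N}$ includes $0$. *)

(* Defs.v *)
From HB Require Import structures.
From mathcomp Require Import all_boot all_order all_algebra.
From mathcomp Require Import finmap.
Set Implicit Arguments. Unset Strict Implicit. Unset Printing Implicit Defensive.
Import Order.TTheory GRing.Theory Num.Theory.
Local Open Scope ring_scope.
Local Open Scope fset_scope.

(* [a:b] = {c in Z | a <= c <= b}, empty if b < a *)
Definition zrange (a b : int) : {fset int} :=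
  [fset (a + i%:Z)%R | i in iota 0 (if a <= b then (absz (b - a)).+1 else 0%N)].

Definition sumset (A B : {fset int}) : {fset int} := [fset (a + b)%R | a in A, b in B].
Definition diffset (A B : {fset int}) : {fset int} := [fset (a - b)%R | a in A, b in B].
Definition rsub (c : int) (A : {fset int}) : {fset int} := [fset (c - a)%R | a in A].
Definition shift (A : {fset int}) (c : int) : {fset int} := [fset (a + c)%R | a in A].

Definition fmax (A : {fset int}) : int :=
  \big[Num.max/head 0 (A : seq int)]_(x <- (A : seq int)) x.

Definition symarr (D : {fset int}) (l : int) : {fset int} :=
  D `|` shift (rsub (fmax D) D) l.

(* Main.v *)
Require Import Defs.
From HB Require Import structures.
From mathcomp Require Import all_boot all_order all_algebra.
From mathcomp Require Import finmap zify ring.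
Import Order.TTheory GRing.Theory Num.Theory.
Local Open Scope ring_scope.
Local Open Scope fset_scope.

Lemma in_zrange a b x : (x \in zrange a b) = (a <= x <= b).
Proof.
apply/imfsetP/idP => /=.
  case=> i; rewrite mem_iota add0n => /andP[_ Hi] ->.
  case: ifP Hi => Hab Hi; last by [].
  move: Hi; rewrite ltnS => Hi.
  have : ((i:int) <= `|b - a|%N :> int) by rewrite lez_nat.
  rewrite gez0_abs ?subr_ge0 //. lia.
move=> /andP[H1 H2]; exists (absz (x - a)); last by rewrite gez0_abs ?subr_ge0 //; lia.
rewrite mem_iota add0n /= ifT; last lia.
rewrite ltnS -lez_nat !gez0_abs ?subr_ge0 //; try lia.
Qed.

Lemma size_enum_seq (s : seq int) : uniq s -> size (enum_finmem (mem s)) = size s.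
Proof.
move=> us; apply: perm_size; apply: uniq_perm => //; first exact: enum_finmem_uniq.
exact: enum_finmemE.
Qed.

Lemma size_enum_fset (A : {fset int}) : size (enum_finmem (mem A)) = #|` A|.
Proof.
apply: perm_size; apply: uniq_perm => //; first exact: enum_finmem_uniq.
Qed.

Lemma card_zrange0 (k : nat) : #|` zrange 0 (k%:Z - 1)| = k.
Proof.
rewrite /zrange card_imfset; last by move=> i j /=; rewrite !add0r => -[].
set L := iota _ _.
rewrite (@perm_size _ _ L); last first.
  apply: uniq_perm; [exact: enum_finmem_uniq|exact: iota_uniq|].
  by move=> z; rewrite enum_finmemE.
rewrite /L size_iota; clear L.
case: k => [|k] //=; lia.
Qed.

Lemma in_shift A c x : (x \in shift A c) = (x - c \in A).
Proof.
apply/imfsetP/idP => /=.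
  by case=> a Ha ->; rewrite addrK.
by move=> H; exists (x - c) => //; rewrite subrK.
Qed.

Lemma card_shift A c : #|` shift A c| = #|` A|.
Proof.
rewrite /shift card_imfset; last by move=> a b /= /addIr.
rewrite (@perm_size _ _ (A : seq int)) //.
Qed.

Lemma in_rsub c A x : (x \in rsub c A) = (c - x \in A).
Proof.
apply/imfsetP/idP => /=.
  by case=> a Ha ->; rewrite opprB addrC subrK.
by move=> H; exists (c - x) => //; rewrite opprB addrC subrK.
Qed.

Lemma in_D2 (n : int) (B : {fset int}) x : 0 <= n ->
  (x \in [fset (k * (n + 1))%R | k in B]) <-> exists2 k, k \in B & x = k * (n + 1).
Proof.
move=> hn; split.
  by case/imfsetP => k Hk ->; exists k.
by case=> k Hk ->; apply/imfsetP; exists k.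
Qed.

Lemma card_D2 (n : int) (B : {fset int}) : 0 <= n -> #|` [fset (k * (n + 1))%R | k in B]| = #|` B|.
Proof.
move=> hn; rewrite card_imfset.
rewrite (@perm_size _ _ (B : seq int)) //.
move=> a b /= H.
apply/eqP; rewrite -subr_eq0; apply/eqP.
have : (a - b) * (n + 1) = 0 by rewrite mulrBl H subrr.
move/eqP; rewrite mulf_eq0 => /orP[/eqP //|]; lia.
Qed.

Lemma bigmax_ub (s : seq int) i y : y \in s ->
  y <= \big[Num.max/i]_(x <- s) x.
Proof.
elim: s => [//|a s IH]; rewrite inE big_cons => /orP[/eqP ->|/IH H].
  by rewrite le_max lexx.
by rewrite le_max H orbT.
Qed.

Lemma bigmax_le (s : seq int) i c : i <= c -> (forall y, y \in s -> y <= c) ->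
  \big[Num.max/i]_(x <- s) x <= c.
Proof.
move=> hi; elim: s => [|a s IH] H; first by rewrite big_nil.
rewrite big_cons ge_max H ?inE ?eqxx // IH // => y Hy; apply: H; by rewrite inE Hy orbT.
Qed.

Lemma fmax_eq (A : {fset int}) x : x \in A -> (forall y, y \in A -> y <= x) -> fmax A = x.
Proof.
move=> Hx H; apply/eqP; rewrite eq_le; apply/andP; split; last exact: bigmax_ub.
apply: bigmax_le => //.
apply: H.
have Hx' : x \in (A : seq int) := Hx.
suff : head 0 (A : seq int) \in (A : seq int) by [].
by case: (A : seq int) Hx' => [//|a s] _ /=; rewrite inE eqxx.
Qed.

Lemma in_sumset (A B : {fset int}) x : (x \in sumset A B) <-> exists a b, [/\ a \in A, b \in B & x = (a + b)%R].
Proof.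
split.
  by case/imfset2P => a Ha [b Hb ->]; exists a, b.
by case=> a [b [Ha Hb ->]]; apply/imfset2P; exists a => //; exists b.
Qed.

Lemma in_diffset (A B : {fset int}) x : (x \in diffset A B) <-> exists a b, [/\ a \in A, b \in B & x = (a - b)%R].
Proof.
split.
  by case/imfset2P => a Ha [b Hb ->]; exists a, b.
by case=> a [b [Ha Hb ->]]; apply/imfset2P; exists a => //; exists b.
Qed.
Local Close Scope fset_scope.
Definition P (n m x : int) : Prop :=
  (0 <= x <= n - 1) \/ (exists2 k, 0 <= k <= m - 1 & x = (k * (n + 1) + n)%R) \/
  ((n + 1) * m <= x <= (n + 1) * m + n - 1).

Lemma P_range n m x : 0 <= n -> 1 <= m -> P n m x -> 0 <= x <= (n + 1) * m + n - 1.
Proof.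
move=> hn hm [H|[[k Hk ->]|H]]; try lia.
nia.
Qed.

Lemma P_sym n m x : 0 <= n -> 1 <= m -> P n m x -> P n m ((n + 1) * m + n - 1 - x).
Proof.
move=> hn hm [H|[[k Hk ->]|H]].
- right; right; lia.
- right; left; exists (m - 1 - k); [lia|ring].
- left; lia.
Qed.

Lemma P_sum n m t : 0 <= n -> 1 <= m -> 0 <= t <= 2 * ((n + 1) * m + n - 1) ->
  exists x y, [/\ P n m x, P n m y & t = x + y].
Proof.
move=> hn hm ht.
have hd : n + 1 != 0 by lia.
have E := divz_eq t (n + 1).
have r0 := modz_ge0 t hd.
have r1 : (t %% (n + 1))%Z < n + 1 by apply: ltz_pmod; lia.
move: E r0 r1; set q := (t %/ (n + 1))%Z; set r := (t %% (n + 1))%Z => E r0 r1.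
clearbody q r; subst t.
have q0 : 0 <= q by nia.
have qM : q <= 2 * m + 1 by nia.
have bk : forall k, 0 <= k <= m - 1 -> P n m (k * (n + 1) + n).
  by move=> k Hk; right; left; exists k.
have ak : forall a, 0 <= a <= n - 1 -> P n m a by move=> a Ha; left.
have ck : forall j, 0 <= j <= n - 1 -> P n m ((n + 1) * m + j).
  by move=> j Hj; right; right; lia.
have [n0|n1] : n = 0 \/ 1 <= n by lia.
  subst n.
  have r00 : r = 0 by lia.
  subst r.
  have [qa|qb] : q <= m - 1 \/ m - 1 <= q by lia.
    exists (q * (0 + 1) + 0), (0 * (0 + 1) + 0); split; try (apply: bk; lia); ring.
  exists ((m - 1) * (0 + 1) + 0), ((q - m + 1) * (0 + 1) + 0); split; try (apply: bk; nia); ring.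
have [rA|[rB|rC]] : r = n - 1 \/ r <= n - 2 \/ r = n by lia.
-
  subst r.
  have [qa|[qb|qc]] : q = 0 \/ (1 <= q <= 2 * m - 1) \/ q >= 2 * m by lia.
  + subst q; exists (n - 1), 0; split; try (apply: ak; lia); ring.
  + have [qa|qb'] : q - 1 <= m - 1 \/ m - 1 <= q - 1 by lia.
      exists ((q - 1) * (n + 1) + n), (0 * (n + 1) + n); split; try (apply: bk; lia); ring.
    exists ((m - 1) * (n + 1) + n), ((q - m) * (n + 1) + n); split; try (apply: bk; lia); ring.
  + have q2 : q = 2 * m by nia.
    subst q; exists ((n + 1) * m + (n - 1)), ((n + 1) * m + 0); split; try (apply: ck; lia); ring.
- have [qa|[qb|[qc|qd]]] : q = 0 \/ (1 <= q <= m) \/ (m + 1 <= q <= 2 * m) \/ q = 2 * m + 1 by lia.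
  + subst q; exists r, 0; split; try (apply: ak; lia); ring.
  + exists ((q - 1) * (n + 1) + n), (r + 1); split; try (apply: bk; lia); try (apply: ak; lia); ring.
  + exists ((q - 1 - m) * (n + 1) + n), ((n + 1) * m + (r + 1)); split; try (apply: bk; lia); try (apply: ck; lia); ring.
  + subst q. have r3 : r <= n - 3 by nia.
    exists ((n + 1) * m + (n - 1)), ((n + 1) * m + (r + 2)); split; try (apply: ck; lia); ring.
- subst r.
  have [qa|[qb|qc]] : q <= m - 1 \/ (m <= q <= 2 * m - 1) \/ q >= 2 * m by lia.
  + exists (q * (n + 1) + n), 0; split; try (apply: bk; lia); try (apply: ak; lia); ring.
  + exists ((q - m) * (n + 1) + n), ((n + 1) * m + 0); split; try (apply: bk; lia); try (apply: ck; lia); ring.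
  + have q2 : q = 2 * m by nia.
    subst q. have n2 : 2 <= n by nia.
    exists ((n + 1) * m + (n - 1)), ((n + 1) * m + 1); split; try (apply: ck; lia); ring.
Qed.

Local Open Scope fset_scope.
Lemma memS2 (n m x : int) : 0 <= n ->
  (x \in shift [fset (k * (n + 1))%R | k in zrange 0 (m - 1)] n) <->
  exists2 k, 0 <= k <= m - 1 & x = (k * (n + 1) + n)%R.
Proof.
move=> hn; rewrite in_shift in_D2 //; split.
  by case=> k; rewrite in_zrange => Hk Hx; exists k => //; rewrite -Hx subrK.
by case=> k Hk ->; exists k; rewrite ?in_zrange ?addrK.
Qed.

Definition Q (n m x : int) : Prop :=
  (0 <= x <= n - 1) \/ (exists2 k, 0 <= k <= m - 1 & x = (k * (n + 1) + n)%R).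

Lemma memDNA (n m x : int) : 0 <= n ->
  (x \in zrange 0 (n - 1) `|` shift [fset (k * (n + 1))%R | k in zrange 0 (m - 1)] n)
  <-> Q n m x.
Proof.
move=> hn; rewrite in_fsetU in_zrange; split.
  by case/orP => [H|/(memS2 _ _ _ hn) H]; [left|right].
by case=> [->//|/(memS2 _ _ _ hn) ->]; rewrite orbT.
Qed.

Lemma memC (n m x : int) : 0 <= n ->
  (x \in zrange 0 (n - 1) `|` shift [fset (k * (n + 1))%R | k in zrange 0 (m - 1)] n
     `|` shift (zrange 0 (n - 1)) ((n + 1) * m)) <-> P n m x.
Proof.
move=> hn; rewrite in_fsetU in_shift in_zrange; split.
  case/orP => [/(memDNA _ _ _ hn) [H|H]|H]; [left|right;left|right;right] => //; lia.
case=> [H|[H|H]].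
- by apply/orP; left; apply/(memDNA _ _ _ hn); left.
- by apply/orP; left; apply/(memDNA _ _ _ hn); right.
- apply/orP; right; lia.
Qed.

Lemma card_disj (A B : {fset int}) : (forall x, x \in A -> x \in B -> False) ->
  #|` A `|` B| = (#|` A| + #|` B|)%N.
Proof.
move=> H; have := cardfsUI A B.
have -> : A `&` B = fset0.
  apply/fsetP => x; rewrite in_fsetI in_fset0.
  by apply/negbTE/negP => /andP[h1 h2]; exact: H h1 h2.
by rewrite cardfs0 addn0.
Qed.

Theorem mainTheorem4 (N1 N2 : nat) (hN2 : (1 <= N2)%N) :
  let D1 : {fset int} := zrange 0 (N1%:Z - 1) in
  let D2 : {fset int} := [fset (k * (N1%:Z + 1))%R | k in zrange 0 (N2%:Z - 1)] in
  let DNA : {fset int} := D1 `|` shift D2 N1%:Z in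
  let DCNA : {fset int} :=
    D1 `|` shift D2 N1%:Z `|` shift D1 ((N1%:Z + 1) * N2%:Z) in
  let M : int := (N1%:Z + 1) * N2%:Z + N1%:Z - 1 in
  [/\ symarr DNA N1%:Z = DCNA,
      #|` DCNA| = (2 * N1 + N2)%N,
      fmax DCNA = M,
      sumset DCNA DCNA = zrange 0 (2 * fmax DCNA)
    & diffset DCNA DCNA = zrange (- fmax DCNA) (fmax DCNA)].
Proof.
move=> D1 D2 DNA DCNA M.
have hn : 0 <= N1%:Z by lia.
have hm : 1 <= N2%:Z by lia.
have mC : forall x, x \in DCNA <-> P N1 N2 x by move=> x; exact: memC.
have mN : forall x, x \in DNA <-> Q N1 N2 x by move=> x; exact: memDNA.
have PM : P N1 N2 M.
  have [n0|n1] : N1%:Z = 0 \/ 1 <= N1%:Z by lia.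
    right; left; exists (N2%:Z - 1); [lia|]; rewrite /M n0; ring.
  right; right; rewrite /M; lia.
have fC : fmax DCNA = M.
  apply: fmax_eq; first by apply/mC.
  by move=> y /mC /P_range; rewrite /M; lia.
split.
- have fN : fmax DNA = (N1%:Z + 1) * N2%:Z - 1.
    apply: fmax_eq.
      apply/mN; right; exists (N2%:Z - 1); [lia|ring].
    move=> y /mN [H|[k Hk ->]]; nia.
  apply/fsetP => x; rewrite /symarr fN in_fsetU in_shift in_rsub.
  apply/idP/idP.
  + case/orP => [/mN H|/mN H]; apply/mC.
      by case: H => H; [left|right; left].
    case: H => [H|[k Hk Hx]].
      right; right; nia.
    right; left; exists (N2%:Z - 1 - k); [lia|]. nia.
  + move/mC => [H|[H|H]].
    * by apply/orP; left; apply/mN; left.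
    * by apply/orP; left; apply/mN; right.
    * apply/orP; right; apply/mN; left; nia.
- rewrite /DCNA card_disj; last first.
    move=> x /(memDNA _ _ _ hn) H; rewrite in_shift in_zrange => H2.
    case: H => [H|[k Hk Hx]]; nia.
  rewrite card_disj; last first.
    move=> x; rewrite in_zrange => H /(memS2 _ _ _ hn) [k Hk Hx]; nia.
  rewrite !card_shift /D2 card_D2 // card_zrange0.
  have -> : D1 = zrange 0 (N1%:Z - 1) by [].
  rewrite card_zrange0; lia.
- exact: fC.
- rewrite fC; apply/fsetP => x; rewrite in_zrange; apply/idP/idP.
    move/in_sumset => [a [b [/mC Ha /mC Hb ->]]].
    move: (P_range _ _ _ hn hm Ha) (P_range _ _ _ hn hm Hb); rewrite /M; lia.
  move=> Hx; have [a [b [Ha Hb ->]]] := P_sum _ _ _ hn hm Hx.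
  by apply/in_sumset; exists a, b; split => //; apply/mC.
- rewrite fC; apply/fsetP => x; rewrite in_zrange; apply/idP/idP.
    move/in_diffset => [a [b [/mC Ha /mC Hb ->]]].
    move: (P_range _ _ _ hn hm Ha) (P_range _ _ _ hn hm Hb); rewrite /M; lia.
  move=> Hx.
  have Hx' : (0 <= x + M <= 2 * ((N1%:Z + 1) * N2%:Z + N1%:Z - 1))%R by rewrite /M in Hx *; lia.
  have [a [b [Ha Hb E]]] := P_sum _ _ _ hn hm Hx'.
  apply/in_diffset; exists a, (M - b); split; try apply/mC => //.
    exact: P_sym.
  lia.
Qed.
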